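(* Let $k\in\mathbb{N}$, let $G_{\pm}(x)=|1+e^{2\pi i x}\pm e^{2\pi i (k+2)x}|^2$, and for $\rho\in\mathbb{N}$ put $A(\rho)=\sum_{\mu=0}^{\rho}\binom{\rho}{\mu}^2\binom{2\rho-2\mu}{\rho-\mu}$. Let $\rho\in\mathbb{N}$ with $\rho\le k+1$ and let $\tau>0$ be real. Then, for both choices of sign, $$\int_0^{1/2}G_{\pm}^{\tau}\le \tfrac12\,9^{\tau-\rho}A(\rho)\quad\text{if }\tau>\rho,\qquad \int_0^{1/2}G_{\pm}^{\tau}\le \tfrac12\,A(\rho)^{\tau/\rho}\quad\text{if }\tau<\rho.$$
   Context: The values $A(0),\dots,A(6)$ are $1,3,15,93,639,4653,35169$. For $\rho\le k+1$ one has $\int_0^{1/2}G_\pm^\rho=\frac12A(\rho)$, and $0\le G_\pm\le 9$. *)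

(* Defs.v *)
From HB Require Import structures.
From mathcomp Require Import all_boot all_order all_algebra.
From mathcomp Require Import all_classical all_reals all_analysis.
Set Implicit Arguments. Unset Strict Implicit. Unset Printing Implicit Defensive.
Import Order.TTheory GRing.Theory Num.Theory.
Local Open Scope ring_scope.

(* G_{+} (s = true) and G_{-} (s = false):
   G_pm(x) = |1 + e^{2 pi i x} pm e^{2 pi i (k+2) x}|^2, written as
   (real part)^2 + (imaginary part)^2. *)
Definition Gpm (R : realType) (s : bool) (k : nat) (x : R) : R :=
  let e : R := if s then 1 else -1 in
  (1 + cos (2 * pi * x) + e * cos (2 * pi * (k.+2)%:R * x)) ^+ 2
  + (sin (2 * pi * x) + e * sin (2 * pi * (k.+2)%:R * x)) ^+ 2.

Definition A (rho : nat) : nat :=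
  (\sum_(mu < rho.+1) 'C(rho, mu) ^ 2 * 'C(2 * rho - 2 * mu, rho - mu))%N.

(* Main.v *)
Require Import Defs.
From HB Require Import structures.
From mathcomp Require Import all_boot all_order all_algebra.
From mathcomp Require Import all_classical all_reals all_analysis.
From mathcomp Require Import complex.
From mathcomp Require Import ring lra zify.
Import Order.TTheory GRing.Theory Num.Theory.
Local Open Scope ring_scope.
Local Open Scope classical_set_scope.
Import numFieldNormedType.Exports.
Lemma sum_widenN n N (F : nat -> nat) : (n <= N)%N ->
  (forall i, (n < i)%N -> F i = 0%N) -> (\sum_(i < n.+1) F i = \sum_(i < N.+1) F i)%N.
Proof.
move=> nN F0; elim: N nN => [|N IH]; first by rewrite leqn0 => /eqP->.
rewrite leq_eqVlt => /orP[/eqP->//|nN'].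
rewrite IH //.
by rewrite [RHS]big_ord_recr /= F0 ?addn0.
Qed.

Lemma sumsq_bin m : (\sum_(b < m.+1) 'C(m, b) ^ 2)%N = 'C(m + m, m).
Proof.
rewrite -binomial.Vandermonde; apply: eq_bigr => j _.
by rewrite bin_sub ?mulnn // -ltnS.
Qed.

Lemma A_alt rho : A rho = (\sum_(c < rho.+1) \sum_(b < rho.+1)
   ('C(rho, c) * 'C(rho - c, b)) ^ 2)%N.
Proof.
rewrite /A; apply: eq_bigr => c _.
under eq_bigr do rewrite expnMn.
rewrite -big_distrr /=; congr (_ * _)%N.
rewrite -(@sum_widenN (rho - c) rho (fun b => ('C(rho - c, b) ^ 2)%N)); last 2 first.
- exact: leq_subr.
- by move=> i /bin_small ->.
rewrite sumsq_bin; congr 'C(_, _); lia.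
Qed.
Section Main.
Context {R : realType}.
Notation mu := (@lebesgue_measure R).
Lemma dsin (d x : R) : (fun y => sin (d * y))^`() x = cos (d * x) * d.
Proof.
have Hd : is_derive x 1 (d \*: id) (d *: (1:R)) by apply: is_deriveZ.
rewrite (@derive1_comp _ (fun y => d * y) sin).
- rewrite derive1E (derive_val (f:=sin)) derive1E.
  rewrite (derive_val (f:= d \*: id)) /=. 
  by congr (_ * _); exact: mulr1.
- by case: Hd.
- exact: derivable_sin.
Qed.
Lemma cont_mul (d : R) : continuous (fun y : R => d * y).
Proof.
have -> : (fun y : R => d * y) = ( *%R^~ d) by apply/funext => y; exact: mulrC.
exact: mulrr_continuous.
Qed.
Lemma cont_cos (d : R) : continuous (fun y : R => cos (d * y)).
Proof. move=> x; apply: continuous_comp; [exact: cont_mul|exact: continuous_cos]. Qed.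
Lemma cont_sin (d : R) : continuous (fun y : R => sin (d * y)).
Proof. move=> x; apply: continuous_comp; [exact: cont_mul|exact: continuous_sin]. Qed.
Lemma int_cos (d : R) : d != 0 ->
  \int[mu]_(x in `[0, 2^-1]) cos (d * x) = sin (d / 2) / d.
Proof.
move=> d0.
pose F := fun y : R => d^-1 * sin (d * y).
have dF : forall x : R, is_derive x (1:R) F (cos (d * x)).
  move=> x.
  have Hs : is_derive x 1 (fun y => sin (d * y)) (cos (d * x) * d).
    rewrite -dsin derive1E; apply: derivableP.
    have Hd : is_derive x 1 (d \*: id) (d *: (1:R)) by apply: is_deriveZ.
    apply/derivable1_diffP.
    apply: (@differentiable_comp _ _ _ _ (fun y => d * y) sin).
      by apply/derivable1_diffP; case: Hd.
    by apply/derivable1_diffP; exact: derivable_sin.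
  have := @is_deriveZ R R R _ (d^-1) x 1 _ Hs.
  move=> H; rewrite /F.
  change (is_derive x 1 (d^-1 \*: (fun y => sin (d*y))) (cos (d*x))).
  apply: (is_derive_eq H).
  by rewrite /GRing.scale /= mulrCA mulVf // mulr1.
have := @continuous_FTC2 R (fun y => cos (d * y)) F 0 (2^-1) _ _ _ _.
have cF : continuous F.
  by move=> x; exact: (@continuousM R R (fun=> d^-1) (fun y => sin (d*y)) x (@cst_continuous _ _ _ x) (cont_sin d x)).
move=> H; rewrite /Rintegral H //.
- by rewrite /F /= mulr0 sin0 mulr0 subr0 mulrC.
- by apply: continuous_subspaceT => x; exact: cont_cos.
- split.
  + by move=> x _; case: (dF x).
  + exact: cvg_at_right_filter (cF 0).
  + exact: cvg_at_left_filter (cF _).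
- by move=> x _; rewrite derive1E; case: (dF x).
Qed.
Lemma sin_natpi (k : nat) : sin (k%:R * pi) = 0 :> R.
Proof.
rewrite mulr_natl; have := alternatingn (@sinDpi R) k 0.
by rewrite add0r sin0 mulr0.
Qed.
Lemma int_cosdiff (n m : nat) :
  \int[mu]_(x in `[0, 2^-1]) cos (n%:R * (2 * pi * x) - m%:R * (2 * pi * x))
  = if n == m then 2^-1 else 0.
Proof.
pose d : R := (n%:R - m%:R) * (2 * pi).
have -> : \int[mu]_(x in `[0, 2^-1]) cos (n%:R * (2 * pi * x) - m%:R * (2 * pi * x))
   = \int[mu]_(x in `[0, 2^-1]) cos (d * x).
  by apply: eq_Rintegral => x _; rewrite /d -mulrBl mulrA.
case: eqP => [nm|/eqP nm].
  rewrite /d nm subrr mul0r.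
  under eq_Rintegral do rewrite mul0r cos0.
  rewrite Rintegral_cst //= lebesgue_measure_itv /= ifT; last by rewrite lte_fin invr_gt0.
  by rewrite oppr0 adde0 mul1r.
have d0 : d != 0.
  rewrite /d mulf_neq0 //; last by rewrite mulf_neq0 // gt_eqF // pi_gt0.
  by rewrite subr_eq0 eqr_nat.
rewrite int_cos // (_ : d / 2 = (n%:R - m%:R) * pi); last first.
  by rewrite /d -mulrA (mulrC 2 pi) -mulrA mulfV ?mulr1 // pnatr_eq0.
case: (leqP m n) => [mn|nm'].
  by rewrite -natrB // sin_natpi mul0r.
by rewrite -opprB -natrB ?(ltnW nm') // mulNr sinN sin_natpi oppr0 mul0r.
Qed.
Lemma cint (f : R -> R) : continuous f -> mu.-integrable `[0, 2^-1] (EFin \o f).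
Proof.
move=> cf; apply: continuous_compact_integrable; first exact: segment_compact.
exact: continuous_subspaceT.
Qed.

Lemma Rint_sum (I : Type) (s : seq I) (F : I -> R -> R) :
  (forall i, continuous (F i)) ->
  continuous (fun x => \sum_(i <- s) F i x) /\
  \int[mu]_(x in `[0, 2^-1]) (\sum_(i <- s) F i x)
    = \sum_(i <- s) \int[mu]_(x in `[0, 2^-1]) F i x.
Proof.
move=> cF; elim: s => [|a s [IHc IHi]].
  split.
    under eq_fun do rewrite big_nil. exact: cst_continuous.
  under eq_Rintegral do rewrite big_nil.
  by rewrite Rintegral_cst // mul0r big_nil.
split.
  under eq_fun do rewrite big_cons.
  by move=> x; apply: continuousD; [exact: cF | exact: IHc].
under eq_Rintegral do rewrite big_cons.
rewrite big_cons RintegralD //; first by rewrite IHi.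
  exact: cint.
exact: cint.
Qed.
Definition Cs {I : finType} (w : I -> R) (e : I -> nat) (x : R) :=
  \sum_i w i * cos ((e i)%:R * (2 * pi * x)).
Definition Ss {I : finType} (w : I -> R) (e : I -> nat) (x : R) :=
  \sum_i w i * sin ((e i)%:R * (2 * pi * x)).

Lemma CS_expand (I : finType) (w : I -> R) (e : I -> nat) x :
  Cs w e x ^+ 2 + Ss w e x ^+ 2 =
  \sum_i \sum_j (w i * w j) *
     cos ((e i)%:R * (2 * pi * x) - (e j)%:R * (2 * pi * x)).
Proof.
rewrite /Cs /Ss !expr2 !mulr_suml -big_split /=; apply: eq_bigr => i _.
rewrite !mulr_sumr -big_split /=; apply: eq_bigr => j _.
rewrite cosB; ring.
Qed.

Lemma cont_cosn (a b : nat) : continuous (fun x : R =>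
  cos (a%:R * (2 * pi * x) - b%:R * (2 * pi * x))).
Proof.
have -> : (fun x : R => cos (a%:R * (2 * pi * x) - b%:R * (2 * pi * x)))
  = (fun x => cos (((a%:R - b%:R) * (2 * pi)) * x)).
  by apply/funext => x; rewrite -mulrBl mulrA.
exact: cont_cos.
Qed.

Lemma int_CS (I : finType) (w : I -> R) (e : I -> nat) :
  \int[mu]_(x in `[0, 2^-1]) (Cs w e x ^+ 2 + Ss w e x ^+ 2) =
  2^-1 * \sum_i \sum_j (w i * w j) * (e i == e j)%:R.
Proof.
under eq_Rintegral do rewrite CS_expand.
have cterm : forall i j, continuous (fun x : R => (w i * w j) *
     cos ((e i)%:R * (2 * pi * x) - (e j)%:R * (2 * pi * x))).
  move=> i j x; exact: (@continuousM R R (fun=> w i * w j) _ x (@cst_continuous _ _ _ x) (cont_cosn _ _ x)).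
have csum := fun i => (@Rint_sum _ (index_enum I) _ (cterm i)).1.
rewrite (@Rint_sum _ _ _ csum).2.
rewrite mulr_sumr; apply: eq_bigr => i _.
rewrite (@Rint_sum _ _ _ (cterm i)).2 mulr_sumr; apply: eq_bigr => j _.
rewrite RintegralZl //; last exact: cint (cont_cosn _ _).
by rewrite int_cosdiff; case: eqP => _ /=; rewrite ?mulr1 ?mulr0 /= 1?mulrC.
Qed.
Local Notation C := R[i].
Local Open Scope complex_scope.
Lemma mulcE (a b c d : R) : (Complex a b : C) * Complex c d = Complex (a*c - b*d) (a*d + b*c).
Proof. by []. Qed.
Lemma addcE (a b c d : R) : (Complex a b : C) + Complex c d = Complex (a + c) (b + d).
Proof. by []. Qed.
Lemma onecE : (1 : C) = Complex 1 0. Proof. by []. Qed.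
Lemma zerocE : (0 : C) = Complex 0 0. Proof. by []. Qed.
Lemma realcE (r : R) : r%:C = Complex r 0. Proof. by []. Qed.

Definition Nc (z : C) := complex.Re z ^+ 2 + complex.Im z ^+ 2.
Lemma NcM a b : Nc (a * b) = Nc a * Nc b.
Proof. case: a => a1 a2; case: b => b1 b2; rewrite mulcE /Nc /=; ring. Qed.
Lemma NcX a n : Nc (a ^+ n) = Nc a ^+ n.
Proof.
elim: n => [|n IH]; first by rewrite !expr0 onecE /Nc /=; ring.
by rewrite !exprS NcM IH.
Qed.
Lemma Re_sum (I : Type) (s : seq I) (F : I -> C) :
  complex.Re (\sum_(i <- s) F i) = \sum_(i <- s) complex.Re (F i).
Proof.
elim: s => [|a s IH]; first by rewrite !big_nil.
by rewrite !big_cons -IH; case: (F a); case: (\sum_(j <- s) F j).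
Qed.
Lemma Im_sum (I : Type) (s : seq I) (F : I -> C) :
  complex.Im (\sum_(i <- s) F i) = \sum_(i <- s) complex.Im (F i).
Proof.
elim: s => [|a s IH]; first by rewrite !big_nil.
by rewrite !big_cons -IH; case: (F a); case: (\sum_(j <- s) F j).
Qed.

Definition Ec (t : R) : C := Complex (cos t) (sin t).
Lemma EcX t n : Ec t ^+ n = Complex (cos (n%:R * t)) (sin (n%:R * t)).
Proof.
elim: n => [|n IH]; first by rewrite expr0 mul0r cos0 sin0.
rewrite exprSr IH /Ec mulcE -addn1 natrD mulrDl mul1r cosD sinD.
by congr (Complex _ _); ring.
Qed.
Lemma sum_widen (V : nmodType) n N (F : nat -> V) : (n <= N)%N ->
  (forall i, (n < i)%N -> F i = 0) -> \sum_(i < n.+1) F i = \sum_(i < N.+1) F i.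
Proof.
move=> nN F0; elim: N nN => [|N IH]; first by rewrite leqn0 => /eqP->.
rewrite leq_eqVlt => /orP[/eqP->//|nN'].
rewrite IH //.
by rewrite [RHS]big_ord_recr /= F0 ?addr0.
Qed.

Lemma expand3 (a : C) (k rho : nat) (e : R) :
  (1 + a + e%:C * a ^+ k.+2) ^+ rho =
  \sum_(c < rho.+1) \sum_(b < rho.+1)
     ((('C(rho, c) * 'C(rho - c, b))%:R * e ^+ c)%:C * a ^+ (b + k.+2 * c)).
Proof.
rewrite exprDn; apply: eq_bigr => c _.
rewrite exprDn (@sum_widen _ (rho - c) rho
   (fun b => (1 ^+ (rho - c - b) * a ^+ b) *+ 'C(rho - c, b))); last 2 first.
- exact: leq_subr.
- by move=> i /bin_small ->; rewrite mulr0n.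
rewrite -mulr_natr !mulr_suml; apply: eq_bigr => b _.
rewrite expr1n mul1r rmorphM /= rmorphXn /= rmorph_nat exprD exprMn mulnC exprM.
rewrite -[a ^+ b *+ _]mulr_natl natrM.
ring.
Qed.
Lemma Re_term r n t : complex.Re (r%:C * Ec t ^+ n) = r * cos (n%:R * t).
Proof. by rewrite EcX realcE mulcE /=; ring. Qed.
Lemma Im_term r n t : complex.Im (r%:C * Ec t ^+ n) = r * sin (n%:R * t).
Proof. by rewrite EcX realcE mulcE /=; ring. Qed.

Definition sgnb (s : bool) : R := if s then 1 else -1.

Lemma Gpm_Nc s k x : Gpm s k x =
  Nc (1 + Ec (2 * pi * x) + (sgnb s)%:C * Ec (2 * pi * x) ^+ k.+2).
Proof.
rewrite /Gpm /Nc EcX realcE /Ec onecE mulcE !addcE /=.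
have -> : 2 * pi * (k.+2)%:R * x = (k.+2)%:R * (2 * pi * x) by ring.
rewrite /sgnb; case: s; ring.
Qed.
Definition wf (rho : nat) (s : bool) (p : 'I_rho.+1 * 'I_rho.+1) : R :=
  ('C(rho, p.1) * 'C(rho - p.1, p.2))%:R * sgnb s ^+ p.1.
Definition ef (k rho : nat) (p : 'I_rho.+1 * 'I_rho.+1) : nat := (p.2 + k.+2 * p.1)%N.

Lemma GpmX s k rho x : Gpm s k x ^+ rho =
  Cs (wf rho s) (ef k rho) x ^+ 2 + Ss (wf rho s) (ef k rho) x ^+ 2.
Proof.
rewrite Gpm_Nc -NcX expand3 /Nc Re_sum Im_sum.
under eq_bigr do rewrite Re_sum.
under [X in _ + X ^+ 2]eq_bigr do rewrite Im_sum.
rewrite !pair_bigA /Cs /Ss /=.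
by congr (_ ^+ 2 + _ ^+ 2); apply: eq_bigr => p _; rewrite ?Re_term ?Im_term.
Qed.
Lemma wf0 rho s (p : 'I_rho.+1 * 'I_rho.+1) : (rho - p.1 < p.2)%N -> wf rho s p = 0.
Proof. by move=> h; rewrite /wf (bin_small h) muln0 mul0r. Qed.

Lemma ef_inj k rho (p q : 'I_rho.+1 * 'I_rho.+1) : (rho <= k.+1)%N ->
  ~~ (rho - p.1 < p.2)%N -> ~~ (rho - q.1 < q.2)%N ->
  ef k rho p = ef k rho q -> p = q.
Proof.
case: p q => [p1 p2] [q1 q2] /= hr; rewrite -!leqNgt => hp hq; rewrite /ef /=.
have hp' : (p2 < k.+2)%N by apply: leq_ltn_trans hp _; rewrite ltnS (leq_trans (leq_subr _ _) hr).
have hq' : (q2 < k.+2)%N by apply: leq_ltn_trans hq _; rewrite ltnS (leq_trans (leq_subr _ _) hr).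
move=> h.
have h1 : (p1 = q1 :> nat).
  have := congr1 (fun n => n %/ k.+2)%N h => /=.
  rewrite !(addnC _ (k.+2 * _)%N) ![(k.+2 * _)%N]mulnC !divnMDl // !divn_small // !addn0.
  done.
have h2 : (p2 = q2 :> nat) by move: h; rewrite h1 => /addIn.
by congr pair; apply: val_inj.
Qed.

Lemma sum_wf k rho s : (rho <= k.+1)%N ->
  \sum_p \sum_q (wf rho s p * wf rho s q) * (ef k rho p == ef k rho q)%:R
  = (A rho)%:R.
Proof.
move=> hr.
have -> : \sum_p \sum_q (wf rho s p * wf rho s q) * (ef k rho p == ef k rho q)%:R
   = \sum_p (wf rho s p) ^+ 2.
  apply: eq_bigr => p _.
  case: (boolP (rho - p.1 < p.2)%N) => hp.
    rewrite wf0 // expr0n /=; apply: big1 => q _; by rewrite !mul0r.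
  rewrite (bigD1 p) //= eqxx mulr1 big1 ?addr0 ?expr2 // => q qp.
  case: (boolP (rho - q.1 < q.2)%N) => hq; first by rewrite (@wf0 _ s _ hq) mulr0 mul0r.
  case: eqP => [/(@ef_inj _ _ _ _ hr hp hq) e|_]; last by rewrite mulr0.
  by move: qp; rewrite e eqxx.
rewrite (_ : \sum_p wf rho s p ^+ 2 = \sum_c \sum_b wf rho s (c, b) ^+ 2); last first.
  by rewrite pair_bigA; apply: eq_bigr => -[].
rewrite A_alt natr_sum; apply: eq_bigr => c _.
rewrite natr_sum; apply: eq_bigr => b _.
rewrite /wf /= exprMn -exprM [(c * 2)%N]mulnC exprM (_ : sgnb s ^+ 2 = 1); last first.
  by rewrite /sgnb; case: s; rewrite ?expr1n ?sqrrN ?expr1n.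
by rewrite expr1n mulr1 natrX.
Qed.
Lemma int_GpmX s k rho : (rho <= k.+1)%N ->
  \int[mu]_(x in `[0, 2^-1]) (Gpm s k x ^+ rho) = 2^-1 * (A rho)%:R.
Proof.
move=> hr; under eq_Rintegral do rewrite GpmX.
by rewrite int_CS sum_wf.
Qed.

Lemma cont_Cs (I : finType) (w : I -> R) (e : I -> nat) :
  continuous (Cs w e) /\ continuous (Ss w e).
Proof.
have hc : forall i, continuous (fun x => w i * cos ((e i)%:R * (2 * pi * x))).
  move=> i x.
  have -> : (fun x => w i * cos ((e i)%:R * (2 * pi * x))) =
            (fun x => w i * cos (((e i)%:R * (2 * pi)) * x)).
    by apply/funext => y; rewrite mulrA.
  exact: (@continuousM R R (fun=> w i) _ x (@cst_continuous _ _ _ x) (cont_cos _ x)).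
have hs : forall i, continuous (fun x => w i * sin ((e i)%:R * (2 * pi * x))).
  move=> i x.
  have -> : (fun x => w i * sin ((e i)%:R * (2 * pi * x))) =
            (fun x => w i * sin (((e i)%:R * (2 * pi)) * x)).
    by apply/funext => y; rewrite mulrA.
  exact: (@continuousM R R (fun=> w i) _ x (@cst_continuous _ _ _ x) (cont_sin _ x)).
split.
- exact: (@Rint_sum _ (index_enum I) _ hc).1.
- exact: (@Rint_sum _ (index_enum I) _ hs).1.
Qed.

Lemma cont_GpmX s k rho : continuous (fun x : R => Gpm s k x ^+ rho).
Proof.
have -> : (fun x : R => Gpm s k x ^+ rho) = (fun x =>
  Cs (wf rho s) (ef k rho) x ^+ 2 + Ss (wf rho s) (ef k rho) x ^+ 2).
  by apply/funext => x; rewrite GpmX.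
have h1 : continuous (fun x => Cs (wf rho s) (ef k rho) x ^+ 2).
  have -> : (fun x => Cs (wf rho s) (ef k rho) x ^+ 2) =
    (fun x => Cs (wf rho s) (ef k rho) x * Cs (wf rho s) (ef k rho) x).
    by apply/funext => y; rewrite expr2.
  move=> x; refine (@continuousM R R _ _ x _ _); exact: (cont_Cs _ _ _).1.
have h2 : continuous (fun x => Ss (wf rho s) (ef k rho) x ^+ 2).
  have -> : (fun x => Ss (wf rho s) (ef k rho) x ^+ 2) =
    (fun x => Ss (wf rho s) (ef k rho) x * Ss (wf rho s) (ef k rho) x).
    by apply/funext => y; rewrite expr2.
  move=> x; refine (@continuousM R R _ _ x _ _); exact: (cont_Cs _ _ _).2.
move=> x; exact: (continuousD (f:=fun y => Cs (wf rho s) (ef k rho) y ^+ 2) (g:=fun y => Ss (wf rho s) (ef k rho) y ^+ 2) (x:=x) (h1 x) (h2 x)).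
Qed.

Lemma cont_Gpm s k : continuous (@Gpm R s k).
Proof.
have -> : @Gpm R s k = (fun x => Gpm s k x ^+ 1) by apply/funext => x; rewrite expr1.
exact: cont_GpmX.
Qed.

Lemma Gpm_ge0 s k (x : R) : 0 <= Gpm s k x.
Proof. by rewrite /Gpm addr_ge0 // sqr_ge0. Qed.

Lemma Gpm_le9 s k (x : R) : Gpm s k x <= 9.
Proof.
rewrite /Gpm.
set a := cos (2 * pi * x); set b := sin (2 * pi * x).
set c := cos _; set d := sin _.
have hab : a ^+ 2 + b ^+ 2 = 1 by rewrite cos2Dsin2.
have hcd : c ^+ 2 + d ^+ 2 = 1 by rewrite cos2Dsin2.
have q1 := sqr_ge0 (1 - a); have q2 := sqr_ge0 b; have q5 := sqr_ge0 d.
case: s => /=.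
  have q3 := sqr_ge0 (a - c); have q4 := sqr_ge0 (b - d); have q6 := sqr_ge0 (1 - c).
  nra.
have q3 := sqr_ge0 (a + c); have q4 := sqr_ge0 (b + d); have q6 := sqr_ge0 (1 + c).
nra.
Qed.
Lemma int_powG s k (t : R) : 0 <= t ->
  mu.-integrable `[0, 2^-1] (EFin \o (fun x => Gpm s k x `^ t)).
Proof.
move=> t0; apply: measurable_bounded_integrable.
- exact: measurable_itv.
- by rewrite /= lebesgue_measure_itv /= ifT ?ltry // lte_fin invr_gt0.
- apply: (measurableT_comp (measurable_realfun.measurable_powR _)).
  apply: (measurable_funS measurableT (@subsetT _ _)).
  exact: measurable_realfun.continuous_measurable_fun (cont_Gpm s k).
- exists (9 `^ t); split; first exact: num_real.
  move=> M hM x _ /=; rewrite ger0_norm ?powR_ge0 //.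
  apply: le_trans (ltW hM).
  apply: ge0_ler_powR => //; rewrite ?nnegrE ?Gpm_ge0 ?Gpm_le9 //.
Qed.
Lemma cont_aff (c1 c2 : R) (f : R -> R) : continuous f ->
  continuous (fun x => c1 * f x + c2).
Proof.
move=> cf x.
have h1 : {for x, continuous (fun y => c1 * f y)}.
  by refine (@continuousM R R _ _ x _ _); [exact: cst_continuous | exact: cf].
exact: (continuousD (f:=fun y => c1 * f y) (g:=fun=> c2) (x:=x) h1 (@cst_continuous _ _ _ x)).
Qed.

Lemma lin_int (c1 c2 : R) (f : R -> R) : continuous f ->
  \int[mu]_(x in `[0, 2^-1]) (c1 * f x + c2) =
  c1 * \int[mu]_(x in `[0, 2^-1]) f x + c2 * 2^-1.
Proof.
move=> cf.
have cf1 : continuous (fun x => c1 * f x).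
  by move=> x; refine (@continuousM R R _ _ x _ _); [exact: cst_continuous | exact: cf].
rewrite RintegralD //; [|exact: cint|exact: cint (@cst_continuous _ _ c2)].
rewrite RintegralZl //; last exact: cint.
rewrite Rintegral_cst //= lebesgue_measure_itv /= ifT; last by rewrite lte_fin invr_gt0.
by rewrite oppr0 adde0.
Qed.

Lemma A_gt0 rho : (0 < A rho)%N.
Proof.
rewrite /A big_ord_recl /= subn0 muln0 subn0.
apply: (leq_trans _ (leq_addr _ _)).
rewrite muln_gt0 expn_gt0 !bin_gt0 //=; lia.
Qed.
End Main.
Theorem proposition1 (R : realType) (k rho : nat) (tau : R) (s : bool) :
  (rho <= k.+1)%N -> 0 < tau ->
  (rho%:R < tau ->
     Rintegral lebesgue_measure `[0, 2^-1] (fun x => Gpm s k x `^ tau)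
       <= 2^-1 * (9 `^ (tau - rho%:R)) * (A rho)%:R) /\
  (tau < rho%:R ->
     Rintegral lebesgue_measure `[0, 2^-1] (fun x => Gpm s k x `^ tau)
       <= 2^-1 * ((A rho)%:R `^ (tau / rho%:R))).
Proof.
move=> hr t0.
have G0 := @Gpm_ge0 R s k; have G9 := @Gpm_le9 R s k.
have hint := @int_GpmX R s k rho hr.
have cX := @cont_GpmX R s k rho.
have iP := @int_powG R s k tau (ltW t0).
split => ht.
- pose c := 9 `^ (tau - rho%:R) : R.
  apply: (@le_trans _ _ (\int[lebesgue_measure]_(x in `[0, 2^-1]) (c * Gpm s k x ^+ rho + 0))).
    apply: le_Rintegral => //.
      by apply: cint; apply: cont_aff.
    move=> x _; rewrite addr0.
    have e : Gpm s k x `^ tau = Gpm s k x `^ rho%:R * Gpm s k x `^ (tau - rho%:R).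
      rewrite -powRD; first by rewrite addrC subrK.
      by rewrite addrC subrK gt_eqF.
    rewrite e powR_mulrn // mulrC; apply: ler_wpM2r; first exact: exprn_ge0.
    apply: ge0_ler_powR; rewrite ?nnegrE //; first by rewrite subr_ge0 ltW.
  rewrite lin_int // hint mul0r addr0 /c.
  by rewrite mulrA (mulrC (9 `^ _) 2^-1).
- have rp : 0 < rho%:R :> R by apply: lt_trans ht.
  pose a : R := (A rho)%:R.
  have a0 : 0 < a by rewrite /a ltr0n A_gt0.
  pose p := tau / rho%:R.
  have p0 : 0 < p by rewrite /p divr_gt0.
  have p1 : p < 1 by rewrite /p ltr_pdivrMr // mul1r.
  pose c1 := a `^ p * p / a.
  pose c2 := a `^ p * (1 - p).
  apply: (@le_trans _ _ (\int[lebesgue_measure]_(x in `[0, 2^-1]) (c1 * Gpm s k x ^+ rho + c2))).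
    apply: le_Rintegral => //.
      by apply: cint; apply: cont_aff.
    move=> x _.
    set g := Gpm s k x ^+ rho.
    have g0 : 0 <= g by rewrite /g exprn_ge0.
    have e1 : Gpm s k x `^ tau = g `^ p.
      by rewrite /g -powR_mulrn // -powRrM /p mulrCA mulfV ?gt_eqF // mulr1.
    have e2 : g `^ p = a `^ p * (g / a) `^ p.
      rewrite -powRM ?(ltW a0) ?divr_ge0 ?(ltW a0) //.
      by rewrite mulrCA mulfV ?gt_eqF // mulr1.
    set u := (g / a) `^ p.
    have Y : u * 1 <= u `^ p^-1 / p^-1 + 1 `^ (1 - p)^-1 / (1 - p)^-1.
      apply: conjugate_powR; rewrite ?powR_ge0 ?ler01 ?invr_gt0 ?subr_gt0 //.
      by rewrite !invrK addrC subrK.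
    rewrite /u -powRrM mulfV ?gt_eqF // powRr1 ?divr_ge0 ?(ltW a0) //in Y.
    rewrite powR1 /= !invrK mulr1 mul1r in Y.
    rewrite e1 e2 /c1 /c2.
    have apg : 0 <= a `^ p := powR_ge0 _ _.
    have -> : a `^ p * p / a * g + a `^ p * (1 - p) = a `^ p * (g / a * p + (1 - p)).
      by rewrite /=; field; rewrite gt_eqF.
    by apply: ler_wpM2l.
  rewrite lin_int // hint /c1 /c2 -/a -/p.
  rewrite le_eqVlt; apply/orP; left; apply/eqP.
  by field; rewrite gt_eqF.
Qed.
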